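(* Let $N\ge 5$ be an odd integer. If $A$ is an efficiently structured polyomino with square $(N-2)\times(N-2)$ interior, then every space of the interior lying in an odd row of $W$ (i.e. every interior space $(i,j)$ with $i$ and $j$ both odd) is a hole of $A$.
   Context: A polyomino is a finite union of closed unit tiles, meeting only in whole edges, with connected interior; holes are bounded components of the complement, area of a hole = number of unit squares filling it; acyclic means the dual graph (tiles, adjacency along edges) is a tree. A polyomino with $n$ tiles and $h$ holes is efficiently structured if it is acyclic, every hole has area one, and its number of outer (non-hole) boundary edges equals $2\lceil 2\sqrt{n+h}\,\rceil$. $A$ has square $(N-2)\times(N-2)$ interior if its bounding box is $N\times N$ and every space of the outer ring of the bounding box except possibly the four corners is a tile; the interior is the inner $(N-2)\times(N-2)$ square, with spaces indexed $(i,j)$, $1\le i,j\le N-2$ from the top-left, and $W$ the spaces with $i+j$ even. *)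

(* Defs.v *)
From HB Require Import structures.
From mathcomp Require Import all_boot all_order all_algebra.
From mathcomp Require Import finmap.
From mathcomp Require Import boolp.
From mathcomp Require Import zify.
Set Implicit Arguments. Unset Strict Implicit. Unset Printing Implicit Defensive.
Import Order.TTheory GRing.Theory Num.Theory.
Local Open Scope fset_scope.

(* A cell (unit square) of the grid: (row, column).  Rows increase downwards,
   columns increase to the right. *)
Definition Cell := (int * int)%type.

Definition adj (c d : Cell) : bool :=
  (`|(c.1 - d.1)%R|%N + `|(c.2 - d.2)%R|%N == 1)%N.

Definition nbrs (c : Cell) : seq Cell :=
  [:: (c.1 + 1, c.2)%R; (c.1 - 1, c.2)%R; (c.1, c.2 + 1)%R; (c.1, c.2 - 1)%R].

Definition reach_in (P : pred Cell) (c d : Cell) : Prop :=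
  P c /\ exists s : seq Cell, [&& path adj c s, all P s & last c s == d].

Definition polyomino (A : {fset Cell}) : Prop :=
  A != fset0 /\ forall a b, a \in A -> b \in A -> reach_in (mem A) a b.

Definition acyclic (A : {fset Cell}) : Prop :=
  ~ exists s : seq Cell, [&& uniq s, (3 <= size s)%N, all (mem A) s & cycle adj s].

Definition reach_compl (A : {fset Cell}) (c d : Cell) : Prop :=
  reach_in [pred x | x \notin A] c d.

Definition hole_cell (A : {fset Cell}) (c : Cell) : Prop :=
  c \notin A /\
  exists B : nat, forall d, reach_compl A c d -> (`|d.1| <= B)%N /\ (`|d.2| <= B)%N.

Definition num_holes (A : {fset Cell}) (h : nat) : Prop :=
  exists s : seq Cell,
    [/\ uniq s, size s = h,
        forall r, r \in s -> hole_cell A r,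
        forall c, hole_cell A c -> exists2 r, r \in s & reach_compl A r c
      & forall r1 r2, r1 \in s -> r2 \in s -> reach_compl A r1 r2 -> r1 = r2].

Definition holes_area_one (A : {fset Cell}) : Prop :=
  forall c, hole_cell A c -> forall d, reach_compl A c d -> d = c.

Definition outer_perimeter (A : {fset Cell}) : nat :=
  \sum_(a <- enum_fset A)
     count (fun d => `[< d \notin A /\ ~ hole_cell A d >]) (nbrs a).

(* ceil (2 * sqrt m) = least k with 4 m <= k^2. *)
Lemma ceil2sqrt_ex (m : nat) : exists k : nat, (4 * m <= k * k)%N.
Proof. exists (4 * m)%N; nia. Qed.

Definition ceil2sqrt (m : nat) : nat := ex_minn (ceil2sqrt_ex m).

Definition efficiently_structured (A : {fset Cell}) : Prop :=
  [/\ acyclic A, holes_area_one A &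
      exists h, num_holes A h /\
        outer_perimeter A = (2 * ceil2sqrt (#|` A| + h))%N].

Definition in_box (N : nat) (x0 y0 : int) (c : Cell) : bool :=
  [&& (x0 <= c.1)%R, (c.1 <= x0 + (N - 1)%:Z)%R, (y0 <= c.2)%R & (c.2 <= y0 + (N - 1)%:Z)%R].

Definition square_interior (A : {fset Cell}) (N : nat) (x0 y0 : int) : Prop :=
  ([/\ (forall a, a \in A -> in_box N x0 y0 a),
      (exists2 a, a \in A & a.1 = x0),
      (exists2 a, a \in A & a.1 = (x0 + (N - 1)%:Z)%R),
      (exists2 a, a \in A & a.2 = y0)
    & (exists2 a, a \in A & a.2 = (y0 + (N - 1)%:Z)%R)]) /\
  (forall i j : nat, (i < N)%N -> (j < N)%N ->
     [|| i == 0%N, i == (N - 1)%N, j == 0%N | j == (N - 1)%N] ->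
     ~~ (((i == 0%N) || (i == N - 1)%N) && ((j == 0%N) || (j == N - 1)%N)) ->
     ((x0 + i%:Z)%R, (y0 + j%:Z)%R) \in A).

(* Main.v *)
Require Import Defs.
From HB Require Import structures.
From mathcomp Require Import all_boot all_order all_algebra.
From mathcomp Require Import finmap boolp zify.
Import Order.TTheory GRing.Theory Num.Theory.
Set Implicit Arguments. Unset Strict Implicit.

Lemma adj_sym c d : adj c d = adj d c.
Proof. rewrite /adj; apply/idP/idP => /eqP h; apply/eqP; lia. Qed.

Lemma adj_irr c : adj c c = false.
Proof. by rewrite /adj !GRing.subrr. Qed.

Definition deg2 (S : {fset Cell}) := forall y, y \in S -> exists z1 z2,
  [/\ z1 \in S, z2 \in S, z1 != z2, adj y z1 & adj y z2].

Definition hascyc (S : {fset Cell}) :=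
  exists s, [&& uniq s, (3 <= size s)%N, all (mem S) s & cycle adj s].

Lemma cyc_step (S : {fset Cell}) y t : deg2 S ->
  y \in S -> all (mem S) t -> uniq (y :: t) -> path adj y t ->
  hascyc S \/ (exists z, [/\ z \in S, z \notin y :: t & adj z y]).
Proof.
move=> deg yS tS ut pt.
have [z1 [z2 [z1S z2S z12 a1 a2]]] := deg y yS.
case: (boolP (z1 \in y :: t)) => h1; last by right; exists z1; rewrite adj_sym.
case: (boolP (z2 \in y :: t)) => h2; last by right; exists z2; rewrite adj_sym.
left.
have ny1 : z1 != y by apply/eqP => e; rewrite e adj_irr in a1.
have ny2 : z2 != y by apply/eqP => e; rewrite e adj_irr in a2.
case: t tS ut pt h1 h2 => [|t0 t] tS ut pt h1 h2.
  by move: h1; rewrite inE (negbTE ny1).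
have [z [zt zt0 az]] : exists z, [/\ z \in t0 :: t, z != t0 & adj y z].
  move: h1; rewrite in_cons (negbTE ny1) /= => h1.
  move: h2; rewrite in_cons (negbTE ny2) /= => h2.
  case: (eqVneq z1 t0) => [e1|n1].
  - have n2 : z2 != t0 by rewrite -e1 eq_sym.
    by exists z2.
  - by exists z1.
set p := t0 :: t.
set j := index z p.
have jlt : (j < size p)%N by rewrite index_mem.
have jge : (1 <= j)%N.
  rewrite /j /p /= eq_sym (negbTE zt0) //.
have nz : nth y p j = z by rewrite nth_index.
exists (y :: take j.+1 p).
have tk : take j.+1 p = rcons (take j p) z by rewrite (take_nth y jlt) nz.
apply/and4P; split.
- have := take_uniq j.+2 ut. by [].
- rewrite /= size_take; move: jge jlt; case: ifP => _ /= ; clear; lia.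
- apply/allP => w; rewrite in_cons => /orP[/eqP -> //|/mem_take hw].
  by move/allP: tS => /(_ w hw).
- rewrite /cycle rcons_path (take_path j.+1 pt) andTb.
  rewrite tk last_rcons adj_sym az. by [].
Qed.

Lemma cyc_exists (S : {fset Cell}) x : x \in S -> deg2 S -> hascyc S.
Proof.
move=> xS deg.
suff: forall n, hascyc S \/ exists y t,
   [/\ y \in S, all (mem S) t, uniq (y :: t), path adj y t & size t = n].
  move=> /(_ (size (enum_fset S))) [//|[y [t [yS tS ut _ st]]]].
  have : {subset y :: t <= enum_fset S}.
    move=> w; rewrite in_cons => /orP [/eqP -> //|hw].
    by move/allP: tS => /(_ w hw).
  by move=> /(uniq_leq_size ut) /=; rewrite st ltnn.
elim=> [|n [cyc|[y [t [yS tS ut pt st]]]]].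
- by right; exists x, [::].
- by left.
case: (@cyc_step S y t deg yS tS ut pt) => [cyc|[z [zS zn az]]]; first by left.
right; exists z, (y :: t); split => //=.
- by rewrite yS.
- by rewrite zn.
- by rewrite az.
- by rewrite st.
Qed.

Local Open Scope ring_scope.

Definition cheb (a b : Cell) : Prop := `|a.1 - b.1| <= 1 /\ `|a.2 - b.2| <= 1.
Definition inR (K : Cell -> Prop) y := exists k, K k /\ cheb y k.
Definition bd K y := inR K y /\ exists c, cheb y c /\ ~ inR K c.

Definition deg2b K y := exists z1 z2, [/\ z1 != z2, adj y z1, adj y z2, bd K z1 & bd K z2].

Lemma bd_orth K (y c : Cell) a b : inR K y -> `|a| + `|b| = 1 ->
  c.1 = y.1 + a -> c.2 = y.2 + b -> ~ inR K c -> deg2b K y.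
Proof.
move=> hy hab e1 e2 hc.
have hy' := hy; case: hy' => k [Kk hk].
have nk : ~ cheb c k by move=> h; apply: hc; exists k.
case: (EM (inR K (y.1 - b, y.2 + a))) => hn; case: (EM (inR K (y.1 + b, y.2 - a))) => hs.
- exists (y.1 - b, y.2 + a), (y.1 + b, y.2 - a); split.
  + rewrite xpair_eqE; move: hab; clear; lia.
  + rewrite /adj /=; apply/eqP; move: hab; clear; lia.
  + rewrite /adj /=; apply/eqP; move: hab; clear; lia.
  + split => //; exists c; split => //; rewrite /cheb /=; move: hab e1 e2; clear; lia.
  + split => //; exists c; split => //; rewrite /cheb /=; move: hab e1 e2; clear; lia.
- have ns : ~ cheb (y.1 + b, y.2 - a) k by move=> h; apply: hs; exists k.
  exists (y.1 - a, y.2 - b), (y.1 - b, y.2 + a); split.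
  + rewrite xpair_eqE; move: hab; clear; lia.
  + rewrite /adj /=; apply/eqP; move: hab; clear; lia.
  + rewrite /adj /=; apply/eqP; move: hab; clear; lia.
  + split.
      exists k; split => //; move: hk nk ns hab e1 e2; rewrite /cheb /=; clear; lia.
    exists (y.1 + b, y.2 - a); split => //; rewrite /cheb /=; move: hab; clear; lia.
  + split => //; exists c; split => //; rewrite /cheb /=; move: hab e1 e2; clear; lia.
- have nn : ~ cheb (y.1 - b, y.2 + a) k by move=> h; apply: hn; exists k.
  exists (y.1 - a, y.2 - b), (y.1 + b, y.2 - a); split.
  + rewrite xpair_eqE; move: hab; clear; lia.
  + rewrite /adj /=; apply/eqP; move: hab; clear; lia.
  + rewrite /adj /=; apply/eqP; move: hab; clear; lia.
  + split.
      exists k; split => //; move: hk nk nn hab e1 e2; rewrite /cheb /=; clear; lia.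
    exists (y.1 - b, y.2 + a); split => //; rewrite /cheb /=; move: hab; clear; lia.
  + split => //; exists c; split => //; rewrite /cheb /=; move: hab e1 e2; clear; lia.
- have nn : ~ cheb (y.1 - b, y.2 + a) k by move=> h; apply: hn; exists k.
  have ns : ~ cheb (y.1 + b, y.2 - a) k by move=> h; apply: hs; exists k.
  exfalso; move: hk nk nn ns hab e1 e2; rewrite /cheb /=; clear; lia.
Qed.

Lemma bd_deg K y : bd K y -> deg2b K y.
Proof.
move=> [hy [c [hyc hc]]].
have ne : ~ (c.1 = y.1 /\ c.2 = y.2).
  move=> [e1 e2]; apply: hc; case: hy => k [Kk hk]; exists k; split => //.
  by rewrite /cheb e1 e2.
have [hab|[ha hb]] : `|c.1 - y.1| + `|c.2 - y.2| = 1 \/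
                   (`|c.1 - y.1| = 1 /\ `|c.2 - y.2| = 1).
  move: hyc ne; rewrite /cheb; clear; lia.
- refine (bd_orth hy hab _ _ hc); lia.
case: (EM (inR K (y.1 + (c.1 - y.1), y.2))) => h1; last first.
  refine (bd_orth (a := c.1 - y.1) (b := 0) hy _ _ _ h1) => /=; lia.
case: (EM (inR K (y.1, y.2 + (c.2 - y.2)))) => h2; last first.
  refine (bd_orth (a := 0) (b := c.2 - y.2) hy _ _ _ h2) => /=; lia.
exists (y.1 + (c.1 - y.1), y.2), (y.1, y.2 + (c.2 - y.2)); split.
+ rewrite xpair_eqE; move: ha hb; clear; lia.
+ rewrite /adj /=; apply/eqP; move: ha; clear; lia.
+ rewrite /adj /=; apply/eqP; move: hb; clear; lia.
+ split => //; exists c; split => //; rewrite /cheb /=; move: ha hb; clear; lia.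
+ split => //; exists c; split => //; rewrite /cheb /=; move: ha hb; clear; lia.
Qed.

Definition interior (N : nat) (x0 y0 : int) (c : Cell) : bool :=
  [&& x0 + 1 <= c.1, c.1 <= x0 + (N-1)%:Z - 1, y0 + 1 <= c.2 & c.2 <= y0 + (N-1)%:Z - 1].

Lemma ring_in N x0 y0 (A : {fset Cell}) : (0 < N)%N -> square_interior A N x0 y0 ->
  forall c : Cell,
  x0 <= c.1 <= x0 + (N-1)%:Z -> y0 <= c.2 <= y0 + (N-1)%:Z ->
  (c.1 = x0 \/ c.1 = x0 + (N-1)%:Z \/ c.2 = y0 \/ c.2 = y0 + (N-1)%:Z) ->
  ~ ((c.1 = x0 \/ c.1 = x0 + (N-1)%:Z) /\ (c.2 = y0 \/ c.2 = y0 + (N-1)%:Z)) ->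
  c \in A.
Proof.
move=> N0 [_ H] [a b] /= /andP[h1 h2] /andP[h3 h4] hr hc.
have -> : (a, b) = (x0 + (absz (a - x0))%:Z, y0 + (absz (b - y0))%:Z).
  by congr pair; lia.
apply: H; lia.
Qed.

Lemma A_box N x0 y0 (A : {fset Cell}) (c : Cell) : square_interior A N x0 y0 -> c \in A ->
  x0 <= c.1 <= x0 + (N-1)%:Z /\ y0 <= c.2 <= y0 + (N-1)%:Z.
Proof.
move=> [[H _ _ _ _] _] /H; rewrite /in_box => /and4P[h1 h2 h3 h4].
by rewrite h1 h2 h3 h4.
Qed.

Lemma step_interior N x0 y0 (A : {fset Cell}) c d : (0 < N)%N ->
  square_interior A N x0 y0 -> interior N x0 y0 c -> adj c d -> d \notin A ->
  interior N x0 y0 d.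
Proof.
move=> N0 sq hc /eqP had hd.
apply/negPn/negP => hd'; move/negP: hd; apply.
apply: (ring_in N0 sq); move: hc hd' had; rewrite /interior; clear; lia.
Qed.

Lemma reach_interior N x0 y0 (A : {fset Cell}) c d : (0 < N)%N ->
  square_interior A N x0 y0 -> interior N x0 y0 c -> reach_compl A c d ->
  interior N x0 y0 d.
Proof.
move=> N0 sq hc [_ [s /and3P[hp ha /eqP <-]]].
elim: s c hc hp ha => [|x s IH] c hc //= /andP[hcx hp] /andP[hx ha].
apply: IH hp ha. exact: (step_interior N0 sq hc hcx hx).
Qed.

Lemma hole_int N x0 y0 (A : {fset Cell}) c : (0 < N)%N ->
  square_interior A N x0 y0 -> interior N x0 y0 c -> c \notin A -> hole_cell A c.
Proof.
move=> N0 sq hc hnc; split => //.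
exists (absz x0 + absz y0 + N)%N => d /(reach_interior N0 sq hc).
rewrite /interior; clear; lia.
Qed.

Lemma iso N x0 y0 (A : {fset Cell}) c d : (0 < N)%N ->
  square_interior A N x0 y0 -> holes_area_one A ->
  interior N x0 y0 c -> c \notin A -> d \notin A -> adj c d -> False.
Proof.
move=> N0 sq ho hc nc nd hcd.
have := ho c (hole_int N0 sq hc nc) d.
have r : reach_compl A c d.
  split; first exact: nc.
  by exists [:: d]; rewrite /= hcd /= eqxx !andbT.
by move=> /(_ r) e; rewrite e adj_irr in hcd.
Qed.

Lemma square4 (A : {fset Cell}) (p : Cell) a b : acyclic A ->
  p \in A -> (p.1 + a, p.2) \in A -> (p.1 + a, p.2 + b) \in A -> (p.1, p.2 + b) \in A ->
  `|a| = 1 -> `|b| = 1 -> False.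
Proof.
move=> Hac h1 h2 h3 h4 ha hb; apply: Hac.
exists [:: p; (p.1 + a, p.2); (p.1 + a, p.2 + b); (p.1, p.2 + b)].
case: p h1 h2 h3 h4 => r s h1 h2 h3 h4.
rewrite /= !inE h1 h2 h3 h4 /adj /= !xpair_eqE.
move: ha hb; clear; lia.
Qed.

Definition Mpar (x0 y0 : int) (c : Cell) : Prop := ((c.1 - x0 + (c.2 - y0)) %% (Posz 2))%Z = 1.
Definition oo (x0 y0 : int) (c : Cell) : Prop :=
  ((c.1 - x0) %% (Posz 2))%Z = 1 /\ ((c.2 - y0) %% (Posz 2))%Z = 1.

Definition Kh N x0 y0 (A : {fset Cell}) (c : Cell) : Prop :=
  interior N x0 y0 c /\ Mpar x0 y0 c /\ c \notin A.

Lemma claimK N x0 y0 (A : {fset Cell}) y k : (5 <= N)%N -> odd N ->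
  square_interior A N x0 y0 -> holes_area_one A ->
  cheb y k -> Kh N x0 y0 A k -> y \notin A -> ~ Kh N x0 y0 A y -> False.
Proof.
move=> N5 oN sq ho hyk [ik [mk nk]] ny nKy.
have N0 : (0 < N)%N by lia.
case: (boolP (interior N x0 y0 y)) => iy.
- have [[e1 e2]|[ho'|hd]] : (y.1 = k.1 /\ y.2 = k.2) \/ adj y k \/
      (`|y.1 - k.1| = 1 /\ `|y.2 - k.2| = 1).
    rewrite /adj; move: hyk; rewrite /cheb; clear; lia.
  + apply: nKy; have -> : y = k by case: y e1 e2 {ny iy hyk} => a b /= -> ->; case: k {ik mk nk}.
    by split.
  + exact: (iso N0 sq ho iy ny nk ho').
  + apply: nKy; split => //; split => //; move: mk hd; rewrite /Mpar; clear; lia.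
- move/negP: ny; apply; apply: (ring_in N0 sq);
  move: hyk ik iy mk N5 oN; rewrite /cheb /interior /Mpar; clear; lia.
Qed.

Lemma bd_inA N x0 y0 (A : {fset Cell}) y : (5 <= N)%N -> odd N ->
  square_interior A N x0 y0 -> holes_area_one A ->
  bd (Kh N x0 y0 A) y -> y \in A.
Proof.
move=> N5 oN sq ho [[k [Kk hk]] [c [hc nc]]].
case: (boolP (y \in A)) => // ny; exfalso.
case: (EM (Kh N x0 y0 A y)) => Ky.
- apply: nc; exists y; split => //; move: hc; rewrite /cheb; clear; lia.
- exact: (claimK N5 oN sq ho hk Kk ny Ky).
Qed.

Lemma bd_exists N x0 y0 (A : {fset Cell}) k0 :
  Kh N x0 y0 A k0 -> exists y, bd (Kh N x0 y0 A) y.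
Proof.
move=> K0.
suff : forall t : nat, (exists y, bd (Kh N x0 y0 A) y) \/
                        inR (Kh N x0 y0 A) (k0.1 + t%:Z, k0.2).
  move/(_ N) => [//|[k [[ik _] hk]]]; exfalso.
  case: K0 => ik0 _; move: ik ik0 hk; rewrite /interior /cheb /=; clear; lia.
elim => [|t [h|h]]; last 2 first.
- by left.
- case: (EM (inR (Kh N x0 y0 A) (k0.1 + t.+1%:Z, k0.2))) => h'; [by right | left].
  exists (k0.1 + t%:Z, k0.2); split => //.
  exists (k0.1 + t.+1%:Z, k0.2); split => //; rewrite /cheb /=; clear; lia.
- right; exists k0; split => //; rewrite /cheb /=; clear; lia.
Qed.

Local Open Scope fset_scope.
Lemma noM N x0 y0 (A : {fset Cell}) : (5 <= N)%N -> odd N ->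
  square_interior A N x0 y0 -> holes_area_one A -> acyclic A ->
  forall c, interior N x0 y0 c -> Mpar x0 y0 c -> c \in A.
Proof.
move=> N5 oN sq ho Hac c ic mc.
case: (boolP (c \in A)) => // nc; exfalso.
have [y hy] := @bd_exists N x0 y0 A c (conj ic (conj mc nc)).
set S := [fset z in A | asbool (bd (Kh N x0 y0 A) z)].
have memS z : z \in S = (z \in A) && asbool (bd (Kh N x0 y0 A) z).
  by rewrite /S !inE.
have yS : y \in S by rewrite memS (bd_inA N5 oN sq ho hy); apply/asboolP.
have deg : deg2 S.
  move=> z; rewrite memS => /andP[_ /asboolP hz].
  have [z1 [z2 [n12 a1 a2 b1 b2]]] := bd_deg hz.
  exists z1, z2; split => //; rewrite memS.
  + by rewrite (bd_inA N5 oN sq ho b1); apply/asboolP.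
  + by rewrite (bd_inA N5 oN sq ho b2); apply/asboolP.
have [s /and4P[u sz al cy]] := cyc_exists yS deg.
apply: Hac; exists s; rewrite u sz cy andbT /=.
apply/allP => w /(allP al); rewrite /= memS => /andP[].
by [].
Qed.

Local Open Scope ring_scope.

Lemma diag_nontile N x0 y0 (A : {fset Cell}) (x : Cell) (a b : int) : (5 <= N)%N -> odd N ->
  square_interior A N x0 y0 -> holes_area_one A -> acyclic A ->
  interior N x0 y0 x -> oo x0 y0 x -> x \in A -> `|a| = 1 -> `|b| = 1 ->
  (x.1 + a, x.2 + b) \notin A.
Proof.
move=> N5 oN sq ho Hac ix ox xA ha hb; apply/negP => hz.
have N0 : (0 < N)%N by lia.
have inM (u : Cell) : x0 <= u.1 <= x0 + (N-1)%:Z -> y0 <= u.2 <= y0 + (N-1)%:Z ->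
    Mpar x0 y0 u -> u \in A.
  move=> h1 h2 mu; case: (boolP (interior N x0 y0 u)) => iu.
    exact: (noM N5 oN sq ho Hac iu mu).
  apply: (ring_in N0 sq) => //; move: h1 h2 iu mu N5 oN; rewrite /interior /Mpar; clear; lia.
apply: (square4 Hac xA _ hz _ ha hb); apply: inM;
  move: ix ox ha hb; rewrite /interior /oo /Mpar /=; clear; lia.
Qed.

Definition OOT N x0 y0 (A : {fset Cell}) (x : Cell) := [/\ interior N x0 y0 x, oo x0 y0 x & x \in A].
Definition Ccl N x0 y0 (A : {fset Cell}) (z : Cell) :=
  z \in A /\ (OOT N x0 y0 A z \/ exists x : Cell, OOT N x0 y0 A x /\ adj z x).

Lemma ccl_step N x0 y0 (A : {fset Cell}) (y z : Cell) : (5 <= N)%N -> odd N ->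
  square_interior A N x0 y0 -> holes_area_one A -> acyclic A ->
  Ccl N x0 y0 A y -> adj y z -> z \in A -> Ccl N x0 y0 A z.
Proof.
move=> N5 oN sq ho Hac [yA [hy|[x [hx ayx]]]] ayz zA; split => //.
- by right; exists y; rewrite adj_sym.
case: (EM (oo x0 y0 z)) => oz.
- left; split => //.
  have := A_box sq zA; move: oz N5 oN; rewrite /interior /oo; clear.
  move=> [o1 o2] N5 oN [/andP[h1 h2] /andP[h3 h4]].
  apply/and4P; split; lia.
case: hx => ix ox xA.
have hd : `|z.1 - x.1| = 1 /\ `|z.2 - x.2| = 1.
  move: ayx ayz ox oz; rewrite /adj /oo => /eqP h1 /eqP h2; move: h1 h2; clear; lia.
have := diag_nontile N5 oN sq ho Hac ix ox xA hd.1 hd.2.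
have -> : (x.1 + (z.1 - x.1), x.2 + (z.2 - x.2)) = z.
  by case: z {oz zA ayz hd} => a b /=; congr pair; lia.
by rewrite zA.
Qed.

Theorem lemma9 (N : nat) : (5 <= N)%N -> odd N ->
  forall (A : {fset Cell}) (x0 y0 : int),
    polyomino A -> efficiently_structured A -> square_interior A N x0 y0 ->
    forall i j : nat, (1 <= i <= N - 2)%N -> (1 <= j <= N - 2)%N ->
      odd i -> odd j -> hole_cell A ((x0 + i%:Z)%R, (y0 + j%:Z)%R).
Proof.
move=> N5 oN A x0 y0 [_ conn] [Hac ho _] sq i j hi hj oi oj.
have N0 : (0 < N)%N by lia.
set c := (x0 + i%:Z, y0 + j%:Z).
have ic : interior N x0 y0 c by rewrite /interior /c /=; lia.
apply: (hole_int N0 sq ic).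
apply/negP => cA.
set t := (x0, y0 + 2%:Z).
have tA : t \in A.
  apply: (ring_in N0 sq); rewrite /t /=; lia.
have Cc : Ccl N x0 y0 A c.
  split => //; left; split => //; rewrite /oo /c /=; lia.
have [_ [s /and3P[hp ha /eqP hl]]] := conn c t cA tA.
have : Ccl N x0 y0 A (last c s).
  elim: s c Cc {ic cA hl} hp ha => [|z s IH] c Cc //= /andP[hcz hp] /andP[hz ha].
  apply: IH hp ha; exact: (ccl_step N5 oN sq ho Hac Cc hcz hz).
rewrite hl => -[_ [[_ ot _]|[x [[_ ox _] atx]]]].
- by move: ot; rewrite /oo /t /=; lia.
- by move: ox atx; rewrite /oo /t /adj /= => ox /eqP; lia.
Qed.
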